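(* Let $N\ge 2$ and let $\mathcal{A}$ be an $M\times N$ circular Florentine rectangle over $\mathbb{Z}_N$ with rows $\pi_0,\dots,\pi_{M-1}$ (each a permutation of $\mathbb{Z}_N$). Then for all $0\le i\neq r\le M-1$ and every $l'\in\mathbb{Z}_N$, the equation $\pi_i(t)=\pi_r(t+l')$ (with $t+l'$ taken modulo $N$) has exactly one solution $t\in\mathbb{Z}_N$.
   Context: An $M\times N$ circular Florentine rectangle (CFR) over $\mathbb{Z}_N$ is an $M\times N$ array whose rows, viewed as maps $\pi_i:\mathbb{Z}_N\to\mathbb{Z}_N$ ($\pi_i(x)$ is the entry in row $i$, column $x$), are permutations of $\mathbb{Z}_N$, and such that for every $m\in\mathbb{Z}_N\setminus\{0\}$ and all $0\le i,j\le M-1$, $x,y\in\mathbb{Z}_N$, one has $(\pi_i(x),\pi_i(x+m))=(\pi_j(y),\pi_j(y+m))$ (indices modulo $N$) if and only if $i=j$ and $x=y$. *)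

(* Defs.v *)
From mathcomp Require Import all_boot all_order all_fingroup.
Set Implicit Arguments. Unset Strict Implicit. Unset Printing Implicit Defensive.

Lemma ord_pos N (x : 'I_N) : 0 < N.
Proof. exact: leq_ltn_trans (leq0n x) (ltn_ord x). Qed.

Definition zadd N (x y : 'I_N) : 'I_N :=
  Ordinal (ltn_pmod (x + y) (ord_pos x)).

Definition circular_florentine M N (pi : 'I_M -> {perm 'I_N}) : Prop :=
  forall (m : 'I_N), m != 0 :> nat ->
  forall (i j : 'I_M) (x y : 'I_N),
    (pi i x, pi i (zadd x m)) = (pi j y, pi j (zadd y m)) <-> (i = j /\ x = y).

(* Main.v *)
Require Import Defs.
From mathcomp Require Import all_boot all_order all_fingroup.
From mathcomp Require Import zify.
Set Implicit Arguments. Unset Strict Implicit.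

Lemma zadd_val N (x y : 'I_N) : val (zadd x y) = (x + y) %% N.
Proof. by []. Qed.

Lemma zadd_inj N (t a b : 'I_N) : zadd t a = zadd t b -> a = b.
Proof.
move/(congr1 val); rewrite !zadd_val => /eqP.
rewrite eqn_modDl !modn_small ?ltn_ord // => /eqP H; exact: val_inj.
Qed.

Lemma uniq_sol (M N : nat) (pi : 'I_M -> {perm 'I_N}) :
  circular_florentine pi -> forall (i r : 'I_M), i != r ->
  forall (L t1 t2 : 'I_N), pi i t1 = pi r (zadd t1 L) ->
  pi i t2 = pi r (zadd t2 L) -> t1 = t2.
Proof.
move=> HF i r Hir L t1 t2 H1 H2.
case: (eqVneq t1 t2) => // Hne.
have HN := ord_pos t1.
have Hm : (t2 + N - t1) %% N < N by rewrite ltn_pmod.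
pose m : 'I_N := Ordinal Hm.
have Hm0 : m != 0 :> nat.
  rewrite /m /=; apply/negP => /eqP H0.
  have : (t2 + N - t1) = N * ((t2 + N - t1) %/ N) by rewrite {1}(divn_eq (t2 + N - t1) N) H0 addn0 mulnC.
  have := ltn_ord t1; have := ltn_ord t2.
  have : (t2 : nat) <> t1 by move=> E; move/eqP: Hne; apply; apply: val_inj.
  case: (_ %/ _) => [|[|q]] *; lia.
have E1 : zadd t1 m = t2.
  apply: val_inj; rewrite zadd_val /= modnDmr.
  have -> : t1 + (t2 + N - t1) = t2 + N by have := ltn_ord t1; lia.
  by rewrite modnDr modn_small.
have E2 : zadd (zadd t1 L) m = zadd t2 L.
  apply: val_inj; rewrite !zadd_val /= modnDml modnDmr.
  have -> : t1 + L + (t2 + N - t1) = (t2 + L) + N by have := ltn_ord t1; lia.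
  by rewrite modnDr.
have [Hij _] := (HF m Hm0 i r t1 (zadd t1 L)).1 (f_equal2 pair H1 (etrans (congr1 (pi i) E1) (etrans H2 (congr1 (pi r) (esym E2))))).
by move: Hir; rewrite Hij eqxx.
Qed.

Theorem lemma3 (M N : nat) (pi : 'I_M -> {perm 'I_N}) :
  2 <= N -> circular_florentine pi ->
  forall (i r : 'I_M), i != r ->
  forall l' : 'I_N, exists! t : 'I_N, pi i t = pi r (zadd t l').
Proof.
move=> HN2 HF i r Hir l'.
pose s t := ((pi r)^-1)%g (pi i t).
have HN : 0 < N by lia.
have Hl : forall t : 'I_N, (s t + N - t) %% N < N by move=> t; rewrite ltn_pmod.
pose f (t : 'I_N) : 'I_N := Ordinal (Hl t).
have Hf : forall t, zadd t (f t) = s t.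
  move=> t; apply: val_inj; rewrite zadd_val /= modnDmr.
  have -> : t + (s t + N - t) = s t + N by have := ltn_ord t; lia.
  by rewrite modnDr modn_small.
have Hsol : forall t, pi i t = pi r (zadd t (f t)) by move=> t; rewrite Hf /s permKV.
have finj : injective f.
  move=> t1 t2 E; have := uniq_sol HF Hir (Hsol t1); apply; rewrite E; exact: Hsol.
pose p := perm finj.
have Hp : forall x, f x = p x by move=> x; rewrite permE.
exists ((p^-1)%g l'); split.
  have := Hsol ((p^-1)%g l'); rewrite Hp permKV //.
move=> t Ht; apply/esym; have := uniq_sol HF Hir Ht; apply.
have := Hsol ((p^-1)%g l'); rewrite Hp permKV //.
Qed.
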